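(* Let $X_1$ be a random variable with $\mathbb EX_1=0$, $\operatorname{Var}X_1=1$, such that $\varphi(t)=\log\mathbb Ee^{tX_1}<\infty$ for all $t\geq-\sigma_0$ for some $\sigma_0>0$, and let $I(s)=\sup_{t\geq0}(st-\varphi(t))$, $s\geq0$. Let $m_*>1$. The following are equivalent: (a) there is $t_*>0$ with $\frac{\varphi(t_* )}{t_*^2/2}=m_*$ and for every $\varepsilon>0$, $\sup_{0<t<t_*-\varepsilon}\frac{\varphi(t)}{t^2/2}<m_*$ and $\sup_{t>t_*+\varepsilon}\frac{\varphi(t)}{t^2/2}<m_*$; (b) there is $s_*>0$ with $\frac{I(s_* )}{s_*^2/2}=\frac1{m_*}$ and for every $\varepsilon>0$, $\inf_{0<s<s_*-\varepsilon}\frac{I(s)}{s^2/2}>\frac1{m_*}$ and $\inf_{s>s_*+\varepsilon}\frac{I(s)}{s^2/2}>\frac1{m_*}$. Moreover, if these hold, then $\varphi(t_* )=I(s_* )=s_*t_*/2$, $s_*=\varphi'(t_* )=t_*m_*$, $t_*=I'(s_* )=s_*/m_*$, and $I''(s_* )\varphi''(t_* )=1$. *)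

(* Defs.v *)
From HB Require Import structures.
From mathcomp Require Import all_boot all_order all_algebra.
From mathcomp Require Import all_classical all_reals all_analysis.
Set Implicit Arguments. Unset Strict Implicit. Unset Printing Implicit Defensive.
Import Order.TTheory GRing.Theory Num.Theory.
Import numFieldNormedType.Exports.
Local Open Scope classical_set_scope.
Local Open Scope ring_scope.

(* cumulant generating function  phi(t) = log E e^{tX}  (meaningful where the
   moment generating function 'M_P X t is finite) *)
Definition cgf d (T : measurableType d) (R : realType) (P : probability T R)
  (X : T -> R) (t : R) : R := ln (fine ('M_P X t)).

Definition rate d (T : measurableType d) (R : realType) (P : probability T R)
  (X : T -> R) (s : R) : \bar R :=
  ereal_sup [set ((s * t - cgf P X t)%:E) | t in [set t : R | 0 <= t]].

(* Main.v *)
Require Import Defs.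
From HB Require Import structures.
From mathcomp Require Import all_boot all_order all_algebra.
From mathcomp Require Import all_classical all_reals all_analysis.
From mathcomp Require Import ring lra.
Import measurable_realfun.
Import Order.TTheory GRing.Theory Num.Theory.
Import numFieldNormedType.Exports.
Local Open Scope classical_set_scope.
Local Open Scope ring_scope.
Set Implicit Arguments. Unset Strict Implicit. Unset Printing Implicit Defensive.
Section realbounds.
Variable R : realType.

Lemma bound_pow (n : nat) (e c : R) : 0 < e ->
  `|c| ^+ n <= n`!%:R / e ^+ n * expR (e * `|c|).
Proof.
move=> e0; case: n => [|n].
  rewrite !expr0 fact0 invr1 !mul1r -[leLHS]expR0 ler_expR.
  by rewrite mulr_ge0// ltW.
have h := expR_ge1Dxn n (mulr_ge0 (ltW e0) (normr_ge0 c)).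
have h2 : (e * `|c|) ^+ n.+1 <= (n.+1)`!%:R * expR (e * `|c|).
  rewrite -ler_pdivrMl ?ltr0n ?fact_gt0// mulrC.
  by apply: le_trans h; rewrite lerDr.
rewrite exprMn in h2.
rewrite -mulrA mulrC -mulrA ler_pdivlMl ?exprn_gt0//. 
by rewrite mulrC.
Qed.

Lemma exp_mix (a b f c : R) : a <= b -> b <= f ->
  expR (b * c) <= expR (a * c) + expR (f * c).
Proof.
move=> ab bf; have [c0|c0] := leP 0 c.
  by apply: ler_wpDl; [exact: expR_ge0|rewrite ler_expR ler_wpM2r].
by apply: ler_wpDr; [exact: expR_ge0|rewrite ler_expR ler_wnM2r// ltW].
Qed.

Lemma dom_bound (k : nat) (e t c : R) : 0 < e ->
  `|c ^+ k * expR (t * c)| <=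
    k`!%:R / e ^+ k * (expR ((t - e) * c) + expR ((t + e) * c)).
Proof.
move=> e0; rewrite normrM normrX (ger0_norm (expR_ge0 _)).
apply: le_trans (ler_wpM2r (expR_ge0 _) (bound_pow k c e0)) _.
rewrite -[X in X <= _]mulrA; apply: ler_wpM2l.
  by rewrite divr_ge0 ?exprn_ge0 ?ler0n ?ltW.
rewrite -expRD; have [c0|c0] := leP 0 c.
  rewrite ger0_norm// -mulrDl addrC.
  by apply: ler_wpDl; [exact: expR_ge0|].
rewrite ltr0_norm//.
apply: ler_wpDr; [exact: expR_ge0|].
rewrite ler_expR; rewrite le_eqVlt; apply/orP; left; apply/eqP; ring.
Qed.

Lemma is_derive_pexp (c t : R) (k : nat) :
  is_derive t 1 (fun s : R => c ^+ k * expR (s * c)) (c ^+ k.+1 * expR (t * c)).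
Proof.
have h1 : is_derive t 1 (fun s : R => s * c) c.
  have h0 : is_derive t (1:R) (@id R) 1 := is_derive_id t 1.
  have := is_deriveZ c h0.
  have -> : c \*: (@id R) = (fun s : R => s * c) by apply/funext => s /=; rewrite mulrC.
  by rewrite /= scaler1.
have h2 : is_derive t 1 (expR \o (fun s : R => s * c)) (expR (t * c) * c).
  exact: is_derive1_comp.
have h3 := is_deriveZ (c ^+ k) h2.
have -> : (fun s : R => c ^+ k * expR (s * c)) = c ^+ k \*: (expR \o (fun s : R => s * c)) by [].
have -> : c ^+ k.+1 * expR (t * c) = c ^+ k *: (expR (t * c) * c).
  change (c ^+ k *: (expR (t * c) * c)) with (c ^+ k * (expR (t * c) * c)).
  by rewrite exprS; ring.
exact: h3.
Qed.

End realbounds.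
Section mgf.
Variables (d : measure_display) (T : measurableType d) (R : realType)
  (P : probability T R) (X : {RV P >-> R}) (s0 : R).
Hypothesis s0_gt0 : 0 < s0.
Hypothesis Mfin : forall t, - s0 <= t -> ('M_P X t < +oo)%E.

Definition fk (k : nat) (t : R) (y : T) : R := X y ^+ k * expR (t * X y).
Definition Mk (k : nat) (t : R) : R := \int[P]_(y in setT) fk k t y.

Lemma meas_X : measurable_fun setT X.
Proof. exact: measurable_funPT. Qed.

Lemma meas_fk k t : measurable_fun setT (fk k t).
Proof.
apply: measurable_funM; first exact: measurable_funX meas_X.
apply: measurableT_comp; first exact: measurable_expR.
by apply: measurable_funM => //; exact: meas_X.
Qed.

Lemma int_f0 t : - s0 <= t -> P.-integrable setT (EFin \o fk 0 t).
Proof.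
move=> ht; apply/integrableP; split; first exact/measurable_EFinP/meas_fk.
have := Mfin ht; rewrite /mmt_gen_fun unlock => h.
apply: le_lt_trans h; rewrite le_eqVlt; apply/orP; left; apply/eqP.
apply: eq_integral => y _ /=; rewrite /fk expr0 mul1r ger0_norm ?expR_ge0//.
by rewrite mulrC.
Qed.

Lemma int_fk k t : - s0 < t -> P.-integrable setT (EFin \o fk k t).
Proof.
move=> ht; set e := t + s0.
have e0 : 0 < e by rewrite /e -ltrBlDr sub0r.
apply: (@le_integrable _ _ _ P setT measurableT _
  (EFin \o (fun y => k`!%:R / e ^+ k * (fk 0 (t - e) y + fk 0 (t + e) y)))).
- exact/measurable_EFinP/meas_fk.
- move=> y _ /=; rewrite lee_fin.
  apply: le_trans (dom_bound k t (X y) e0) _.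
  rewrite /fk !expr0 !mul1r; rewrite ger0_norm//.
  apply: mulr_ge0; first by rewrite divr_ge0 ?exprn_ge0 ?ltW.
  by apply: addr_ge0; exact: expR_ge0.
- rewrite /comp; under eq_fun do rewrite EFinM.
  apply: integrableZl => //.
  under eq_fun do rewrite EFinD.
  apply: integrableD => //; apply: int_f0.
    rewrite /e; lra.
  rewrite /e; lra.
Qed.


Lemma is_derive_fk (k : nat) (y : T) (t : R) : is_derive t (1:R) (fk k ^~ y) (fk k.+1 t y).
Proof. exact: is_derive_pexp. Qed.

Lemma d1_fk (k : nat) (t : R) (y : T) : partial1of2 (fk k) t y = fk k.+1 t y.
Proof. by rewrite partial1of2E; have [_ ->] := is_derive_fk k y t. Qed.

Lemma Mk_derive (k : nat) (t0 : R) : - s0 < t0 -> is_derive t0 (1:R) (Mk k) (Mk k.+1 t0).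
Proof.
move=> ht0; set e := (t0 + s0) / 3.
have e0 : 0 < e by rewrite /e divr_gt0// -ltrBlDr sub0r.
pose G y := 2 * ((k.+1)`!%:R / e ^+ k.+1) *
   (fk 0 (t0 - 2 * e) y + fk 0 (t0 + 2 * e) y).
have Ia : `]t0 - e, t0 + e[%classic t0.
  by rewrite /= in_itv /=; apply/andP; split; lra.
have intf x : `]t0 - e, t0 + e[%classic x -> P.-integrable setT (EFin \o fk k x).
  rewrite /= in_itv /= => /andP[h1 h2]; apply: int_fk.
  rewrite /e in h1; lra.
have derf1 x y : `]t0 - e, t0 + e[%classic x -> setT y -> derivable (fk k ^~ y) x 1.
  by move=> _ _; have [] := is_derive_fk k y x.
have G_ge0 y : 0 <= G y.
  rewrite /G /fk !expr0 !mul1r; apply: mulr_ge0; last first.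
    by apply: addr_ge0; exact: expR_ge0.
  by apply: mulr_ge0 => //; rewrite divr_ge0 ?exprn_ge0 ?ltW.
have intG : P.-integrable setT (EFin \o G).
  rewrite /comp /G; under eq_fun do rewrite EFinM.
  apply: integrableZl => //; under eq_fun do rewrite EFinD.
  by apply: integrableD => //; apply: int_f0; rewrite /e; lra.
have G_ub x y : `]t0 - e, t0 + e[%classic x -> setT y ->
    `|partial1of2 (fk k) x y| <= G y.
  rewrite /= in_itv /= => /andP[h1 h2] _; rewrite d1_fk.
  apply: le_trans (dom_bound k.+1 x (X y) e0) _.
  rewrite /G /fk !expr0 !mul1r.
  have hA : expR ((x - e) * X y) <= expR ((t0 - 2 * e) * X y) + expR ((t0 + 2 * e) * X y).
    by apply: exp_mix; lra.
  have hB : expR ((x + e) * X y) <= expR ((t0 - 2 * e) * X y) + expR ((t0 + 2 * e) * X y).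
    by apply: exp_mix; lra.
  have C0 : 0 <= (k.+1)`!%:R / e ^+ k.+1 by rewrite divr_ge0 ?exprn_ge0 ?ltW.
  set C := (k.+1)`!%:R / e ^+ k.+1 in C0 *.
  set S := expR ((t0 - 2 * e) * X y) + expR ((t0 + 2 * e) * X y) in hA hB *.
  rewrite (_ : 2 * C * S = C * (2 * S)); last by ring.
  apply: (ler_wpM2l C0); lra.
have := @derivable_under_integral R _ T P (fk k) setT measurableT t0 (t0 - e) (t0 + e)
   Ia intf derf1 G G_ge0 intG G_ub.
have := @differentiation_under_integral R _ T P (fk k) setT measurableT t0 (t0 - e) (t0 + e)
   Ia intf derf1 G G_ge0 intG G_ub.
move=> hd hdv; apply: DeriveDef; first exact: hdv.
rewrite -derive1E /Mk hd; apply: eq_Rintegral => y _.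
exact: d1_fk.
Qed.

End mgf.
Section mgf2.
Variables (d : measure_display) (T : measurableType d) (R : realType)
  (P : probability T R) (X : {RV P >-> R}) (s0 : R).
Hypothesis s0_gt0 : 0 < s0.
Hypothesis Mfin : forall t, - s0 <= t -> ('M_P X t < +oo)%E.
Hypothesis EX0 : ('E_P[X] = 0)%E.
Hypothesis VX1 : ('V_P[X] = 1)%E.

Local Notation fk := (@fk _ _ _ P X).
Local Notation Mk := (@Mk _ _ _ P X).
Let ifk k t := @int_fk _ _ _ P X s0 Mfin k t.

Lemma Mk_fine t : fine ('M_P X t) = Mk 0 t.
Proof.
rewrite /mmt_gen_fun unlock /Mk /Rintegral; congr fine.
by apply: eq_integral => y _ /=; rewrite /fk expr0 mul1r mulrC.
Qed.

Lemma fk0 k y : fk k 0 y = X y ^+ k.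
Proof. by rewrite /fk mul0r expR0 mulr1. Qed.

Lemma Mk00 : Mk 0 0 = 1.
Proof.
rewrite /Mk (@eq_Rintegral _ _ _ P setT (fun _ => 1)); last by move=> y _; rewrite fk0 expr0.
rewrite Rintegral_cst//.
by rewrite mul1r; exact: (congr1 fine (probability_setT P)).
Qed.

Lemma Mk10 : Mk 1 0 = 0.
Proof.
rewrite /Mk (@eq_Rintegral _ _ _ P setT (fun y => X y)); last by move=> y _; rewrite fk0 expr1.
by rewrite /Rintegral -expectation_def EX0.
Qed.

Lemma Mk20 : Mk 2 0 = 1.
Proof.
rewrite /Mk (@eq_Rintegral _ _ _ P setT (fun y => X y ^+ 2)); last by move=> y _; rewrite fk0.
move: VX1; rewrite /variance covariance.unlock EX0 /= expectation.unlock => h.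
rewrite /Rintegral.
rewrite (_ : (\int[P]_(x in setT) (X x ^+ 2)%:E)%E = 1%E) //.
rewrite -h; apply: eq_integral => y _ /=.
by change (((X \- cst 0) * (X \- cst 0)) y) with ((X y - 0) * (X y - 0)); rewrite subr0 expr2.
Qed.


Lemma intRD (f g : T -> R) : P.-integrable setT (EFin \o f) ->
  P.-integrable setT (EFin \o g) -> P.-integrable setT (EFin \o (fun y => f y + g y)).
Proof.
move=> hf hg; rewrite (_ : EFin \o _ = (EFin \o f) \+ (EFin \o g))%E; last first.
  by apply/funext => y.
exact: integrableD.
Qed.

Lemma intRZ (r : R) (f : T -> R) : P.-integrable setT (EFin \o f) ->
  P.-integrable setT (EFin \o (fun y => r * f y)).
Proof.
move=> hf; rewrite (_ : EFin \o _ = (fun y => r%:E * (EFin \o f) y)%E); last first.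
  by apply/funext => y.
exact: integrableZl.
Qed.

Lemma Mk0_ge1 t : - s0 < t -> 1 <= Mk 0 t.
Proof.
move=> ht.
have h0 : -s0 < 0 by rewrite oppr_lt0.
have i1 : P.-integrable setT (EFin \o fk 0 0) := ifk 0 h0.
have i2 : P.-integrable setT (EFin \o (fun y => t * fk 1 0 y)) := intRZ t (ifk 1 h0).
have := @le_Rintegral _ _ _ P setT (fun y => fk 0 0 y + t * fk 1 0 y) (fk 0 t) measurableT
  (intRD i1 i2) (ifk 0 ht).
rewrite RintegralD // (@RintegralZl _ _ _ P setT (fk 1 0) t measurableT (ifk 1 h0)).
rewrite -/(Mk 0 0) -/(Mk 1 0) Mk00 Mk10 mulr0 addr0; apply.
move=> y _; rewrite !fk0 expr0 expr1 /fk expr0 mul1r.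
exact: expR_ge1Dx.
Qed.

Lemma quadE t c : - s0 < t ->
  \int[P]_(y in setT) ((X y - c) ^+ 2 * expR (t * X y)) =
  Mk 2 t - 2 * c * Mk 1 t + c ^+ 2 * Mk 0 t.
Proof.
move=> ht.
rewrite (@eq_Rintegral _ _ _ P setT
  (fun y => fk 2 t y + ((- (2 * c)) * fk 1 t y + c ^+ 2 * fk 0 t y))); last first.
  move=> y _; rewrite /fk.
  rewrite expr1 expr0 mul1r; set a := X y; set b := expR _.
  ring.
rewrite RintegralD //; last 2 first.
- exact: ifk.
- by apply: intRD; apply: intRZ; exact: ifk.
rewrite RintegralD //; last 2 first.
- by apply: intRZ; exact: ifk.
- by apply: intRZ; exact: ifk.
rewrite (@RintegralZl _ _ _ P setT (fk 1 t) _ measurableT (ifk 1 ht)).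
rewrite (@RintegralZl _ _ _ P setT (fk 0 t) _ measurableT (ifk 0 ht)).
rewrite -/(Mk 2 t) -/(Mk 1 t) -/(Mk 0 t); ring.
Qed.


Lemma Mk0_gt0 t : - s0 < t -> 0 < Mk 0 t.
Proof. by move=> ht; apply: lt_le_trans (Mk0_ge1 ht); exact: ltr01. Qed.

Lemma var_pos t : - s0 < t -> 0 < Mk 2 t * Mk 0 t - Mk 1 t ^+ 2.
Proof.
move=> ht; set c := Mk 1 t / Mk 0 t.
have M0 := Mk0_gt0 ht.
have h0 : -s0 < 0 by rewrite oppr_lt0.
have hq := quadE c ht.
pose g y := (X y - c) ^+ 2 * expR (t * X y).
pose h y := (X y - c) ^+ 2.
have mX : measurable_fun setT X := meas_X X.
have mh : measurable_fun setT h.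
  apply: measurable_funX; apply: measurable_funB => //.
have mg : measurable_fun setT g.
  apply: measurable_funM => //; apply: measurableT_comp => //.
  by apply: measurable_funM.
have ig : P.-integrable setT (EFin \o g).
  rewrite (_ : g = fun y => fk 2 t y + ((- (2 * c)) * fk 1 t y + c ^+ 2 * fk 0 t y)).
    by apply: intRD; [exact: ifk|apply: intRD; apply: intRZ; exact: ifk].
  by apply/funext => y; rewrite /g /fk; ring.
suff Qpos : 0 < \int[P]_(y in setT) g y.
  rewrite /g hq in Qpos.
  have -> : Mk 2 t * Mk 0 t - Mk 1 t ^+ 2 =
     (Mk 2 t - 2 * c * Mk 1 t + c ^+ 2 * Mk 0 t) * Mk 0 t.
    by rewrite /c; field; rewrite gt_eqF.
  exact: mulr_gt0.
rewrite lt_neqAle Rintegral_ge0 ?andbT; last first.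
  by move=> y _; rewrite /g mulr_ge0 ?sqr_ge0 ?expR_ge0.
apply/negP => /eqP Q0.
have I0 : (\int[P]_(y in setT) (g y)%:E = 0)%E.
  rewrite -(fineK (integrable_fin_num measurableT ig)).
  by rewrite -/(Rintegral P setT g) -Q0.
have Ia : (\int[P]_(y in setT) `|(g y)%:E| = 0)%E.
  rewrite -I0; apply: eq_integral => y _ /=.
  by rewrite ger0_norm// /g mulr_ge0 ?sqr_ge0 ?expR_ge0.
have mEg : measurable_fun setT (EFin \o g) by apply/measurable_EFinP.
have mEh : measurable_fun setT (EFin \o h) by apply/measurable_EFinP.
have /(ae_eq_integral_abs P measurableT mEg) hae := Ia.
have haeh : ae_eq P setT (EFin \o h) (cst 0%E).
  apply: filterS hae => y hy Ty; have := hy Ty; rewrite /= /h => /eqP.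
  by rewrite eqe mulf_eq0 (negbTE (lt0r_neq0 (expR_gt0 _))) orbF => /eqP ->.
have := @ae_eq_integral _ _ _ P setT (cst 0%E) (EFin \o h) measurableT mEh (measurable_cst _) haeh.
rewrite integral0 => hI.
have := quadE c h0.
rewrite Mk20 Mk10 Mk00 (@eq_Rintegral _ _ _ P setT h); last first.
  by move=> y _; rewrite /h mul0r expR0 mulr1.
rewrite /Rintegral hI /= => /eqP; apply/negP.
rewrite mulr0 subr0 mulr1 eq_sym; apply: lt0r_neq0.
by have := sqr_ge0 c; lra.
Qed.

End mgf2.
Section phi.
Variables (d : measure_display) (T : measurableType d) (R : realType)
  (P : probability T R) (X : {RV P >-> R}) (s0 : R).
Hypothesis s0_gt0 : 0 < s0.
Hypothesis Mfin : forall t, - s0 <= t -> ('M_P X t < +oo)%E.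
Hypothesis EX0 : ('E_P[X] = 0)%E.
Hypothesis VX1 : ('V_P[X] = 1)%E.

Local Notation Mk := (@Mk _ _ _ P X).

Definition Phi (t : R) := ln (Mk 0 t).
Definition dPhi (t : R) := Mk 1 t / Mk 0 t.
Definition ddPhi (t : R) := (Mk 2 t * Mk 0 t - Mk 1 t ^+ 2) / Mk 0 t ^+ 2.

Let M0pos t (ht : - s0 < t) : 0 < Mk 0 t := @Mk0_gt0 _ _ _ P X s0 s0_gt0 Mfin EX0 t ht.
Let Mder k t (ht : - s0 < t) : is_derive t (1:R) (Mk k) (Mk k.+1 t) :=
  @Mk_derive _ _ _ P X s0 Mfin k t ht.

Lemma cgfE t : cgf P X t = Phi t.
Proof. by rewrite /cgf /Phi (@Mk_fine _ _ _ P X). Qed.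

Lemma Phi_derive t : - s0 < t -> is_derive t (1:R) Phi (dPhi t).
Proof.
move=> ht; have h := is_derive1_comp (is_derive1_ln (M0pos ht)) (Mder 0 ht).
have -> : Phi = (@ln R) \o Mk 0 by [].
have -> : dPhi t = (Mk 0 t)^-1 * Mk 1 t by rewrite /dPhi mulrC.
exact: h.
Qed.

Lemma dPhi_derive t : - s0 < t -> is_derive t (1:R) dPhi (ddPhi t).
Proof.
move=> ht.
have hV := is_deriveV (lt0r_neq0 (M0pos ht)) (Mder 0 ht).
have hM := is_deriveM (Mder 1 ht) hV.
have -> : dPhi = (Mk 1 * (fun y => (Mk 0 y)^-1)) by apply/funext.
suff -> : ddPhi t = Mk 1 t *: (- Mk 0 t ^- 2 *: Mk 1 t) + (Mk 0 t)^-1 *: Mk 2 t by [].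
rewrite /ddPhi.
have := M0pos ht; move: (Mk 0 t) (Mk 1 t) (Mk 2 t) => a b c a0.
change ((c * a - b ^+ 2) / a ^+ 2 = b * (- a ^- 2 * b) + a^-1 * c).
by field; rewrite gt_eqF.
Qed.

Lemma ddPhi_pos t : - s0 < t -> 0 < ddPhi t.
Proof.
move=> ht; rewrite /ddPhi divr_gt0 ?exprn_gt0 ?M0pos//.
exact: (@var_pos _ _ _ P X s0 s0_gt0 Mfin EX0 VX1).
Qed.

Lemma Phi0 : Phi 0 = 0.
Proof. by rewrite /Phi (@Mk00 _ _ _ P X) ln1. Qed.

Lemma dPhi0 : dPhi 0 = 0.
Proof. by rewrite /dPhi (@Mk10 _ _ _ P X EX0) mul0r. Qed.

End phi.
Section legendre.
Variables (R : realType) (phi dphi ddphi : R -> R) (s0 : R).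
Hypothesis s0_gt0 : 0 < s0.
Hypothesis hd1 : forall t, - s0 < t -> is_derive t (1:R) phi (dphi t).
Hypothesis hd2 : forall t, - s0 < t -> is_derive t (1:R) dphi (ddphi t).
Hypothesis hdd : forall t, - s0 < t -> 0 < ddphi t.
Hypothesis phi0 : phi 0 = 0.
Hypothesis dphi0 : dphi 0 = 0.

Lemma dphi_cont (a b : R) : - s0 < a -> {within `[a, b], continuous dphi}.
Proof.
move=> ha; apply: derivable_within_continuous => z; rewrite in_itv /= => /andP[az _].
by have [] := hd2 (lt_le_trans ha az).
Qed.

Lemma phi_cont (a b : R) : - s0 < a -> {within `[a, b], continuous phi}.
Proof.
move=> ha; apply: derivable_within_continuous => z; rewrite in_itv /= => /andP[az _].
by have [] := hd1 (lt_le_trans ha az).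
Qed.

Lemma dphi_lt x y : - s0 < x -> x < y -> dphi x < dphi y.
Proof.
move=> hx xy.
have [c /[!in_itv] /= /andP[c1 c2] E] := MVT xy
  (fun z (zin : z \in `]x, y[) => hd2 (lt_trans hx (let: conj a _ := andP zin in a)))
  (@dphi_cont x y hx).
rewrite -subr_gt0 E; apply: mulr_gt0; last by rewrite subr_gt0.
exact: hdd (lt_trans hx c1).
Qed.

Lemma dphi_le x y : - s0 < x -> x <= y -> dphi x <= dphi y.
Proof.
move=> hx; rewrite le_eqVlt => /orP[/eqP -> //|xy].
exact/ltW/dphi_lt.
Qed.

Lemma tangent t u : - s0 < t -> - s0 < u -> phi t + dphi t * (u - t) <= phi u.
Proof.
move=> ht hu; have [tu|ut|->] := ltgtP t u; last by rewrite subrr mulr0 addr0.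
- have [c /[!in_itv] /= /andP[c1 c2] E] := MVT tu
    (fun z (zin : z \in `]t, u[) => hd1 (lt_trans ht (let: conj a _ := andP zin in a)))
    (@phi_cont t u ht).
  have : dphi t <= dphi c by apply: dphi_le => //; exact: ltW.
  have : 0 < u - t by rewrite subr_gt0.
  move=> h1 h2.
  have h3 : (dphi c - dphi t) * (u - t) >= 0 by apply: mulr_ge0; [rewrite subr_ge0|exact: ltW].
  nra.
- have [c /[!in_itv] /= /andP[c1 c2] E] := MVT ut
    (fun z (zin : z \in `]u, t[) => hd1 (lt_trans hu (let: conj a _ := andP zin in a)))
    (@phi_cont u t hu).
  have : dphi c <= dphi t by apply: dphi_le => //; [exact: lt_trans hu c1|exact: ltW].
  have : 0 < t - u by rewrite subr_gt0.
  move: E; set a := dphi c; set b := dphi t; move=> E h1 h2.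
  have : (b - a) * (t - u) >= 0 by apply: mulr_ge0; [rewrite subr_ge0|exact: ltW].
  nra.
Qed.

Lemma dphi_pos t : 0 < t -> 0 < dphi t.
Proof. by move=> t0; rewrite -dphi0; apply: dphi_lt => //; rewrite oppr_lt0. Qed.

Lemma phi_le t : 0 <= t -> phi t <= t * dphi t.
Proof.
move=> t0; have := @tangent t 0; rewrite phi0 sub0r => h.
have /h : - s0 < t by apply: lt_le_trans t0; rewrite oppr_lt0.
rewrite oppr_lt0 => /(_ s0_gt0); rewrite mulrN mulrC; lra.
Qed.

Definition rt (s : R) : \bar R :=
  ereal_sup [set ((s * t - phi t)%:E) | t in [set t : R | 0 <= t]].
Definition gq (t : R) := phi t / (t ^+ 2 / 2).
Definition hq (s : R) := (rt s * ((s ^+ 2 / 2)^-1)%:E)%E.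

Lemma rt_ge s t : 0 <= t -> ((s * t - phi t)%:E <= rt s)%E.
Proof. by move=> t0; apply: ereal_sup_ubound; exists t. Qed.

Lemma rt_eq t : 0 <= t -> rt (dphi t) = (dphi t * t - phi t)%:E.
Proof.
move=> t0; apply/eqP; rewrite eq_le rt_ge// andbT.
apply: ge_ereal_sup => _ [u /= u0 <-]; rewrite lee_fin.
have hs : - s0 < 0 by rewrite oppr_lt0.
have := @tangent t u (lt_le_trans hs t0) (lt_le_trans hs u0); lra.
Qed.

Lemma K1 m s : 0 < m -> 0 < s ->
  ((m^-1 + (m - gq (s / m)) / m ^+ 2)%:E <= hq s)%E.
Proof.
move=> m0 s0'; have := @rt_ge s (s / m) (ltW (divr_gt0 s0' m0)).
have w0 : (0%R <= ((s ^+ 2 / 2)^-1)%:E)%E.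
  by rewrite lee_fin invr_ge0 divr_ge0 ?sqr_ge0.
move/(lee_wpmul2r w0); rewrite -EFinM /hq; apply: le_trans.
rewrite lee_fin le_eqVlt; apply/orP; left; apply/eqP.
rewrite /gq; field.
by rewrite !gt_eqF ?mulr_gt0 ?exprn_gt0 ?divr_gt0.
Qed.

Lemma K2 t c : 0 < t -> 0 < c -> (c%:E <= hq (dphi t))%E -> gq t <= c^-1.
Proof.
move=> t0 c0; rewrite /hq (rt_eq (ltW t0)) -EFinM lee_fin.
set s := dphi t; have s0' : 0 < s by exact: dphi_pos.
set H := (s * t - phi t) * (s ^+ 2 / 2)^-1 => cH.
have H0 : 0 < H by exact: lt_le_trans cH.
apply: (@le_trans _ _ H^-1); last by rewrite lef_pV2// ?posrE.
set r := s / t.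
have -> : gq t = 2 * r - H * r ^+ 2.
  rewrite /gq /H /r; field.
  by rewrite !gt_eqF.
rewrite -subr_ge0 (_ : H^-1 - (2 * r - H * r ^+ 2) = (H * r - 1) ^+ 2 / H).
  by rewrite divr_ge0 ?sqr_ge0 ?ltW.
by field; rewrite gt_eqF.
Qed.

Lemma sup_lt_bound (S : set R) (f : R -> R) c m :
  (forall x, S x -> f x <= c) -> c < m ->
  (ereal_sup [set (f x)%:E | x in S] < m%:E)%E.
Proof.
move=> h cm; apply: (@le_lt_trans _ _ c%:E); last by rewrite lte_fin.
by apply: ge_ereal_sup => _ [x Sx <-]; rewrite lee_fin h.
Qed.

Lemma sup_lt_elim (S : set R) (f : R -> R) m :
  (ereal_sup [set (f x)%:E | x in S] < m%:E)%E ->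
  exists c, c < m /\ forall x, S x -> f x <= c.
Proof.
set u := ereal_sup _ => hu.
have ub x : S x -> ((f x)%:E <= u)%E by move=> Sx; apply: ereal_sup_ubound; exists x.
move: hu ub; case: u => [r| |] hu ub.
- by exists r; split; [rewrite -lte_fin|move=> x /ub; rewrite lee_fin].
- by [].
- exists (m - 1); split; first lra.
  by move=> x /ub; rewrite leeNy_eq.
Qed.

Lemma inf_gt_bound (S : set R) (F : R -> \bar R) c a :
  (forall x, S x -> (c%:E <= F x)%E) -> a < c ->
  (a%:E < ereal_inf [set F x | x in S])%E.
Proof.
move=> h ac; apply: (@lt_le_trans _ _ c%:E); first by rewrite lte_fin.
by apply: le_ereal_inf_tmp => _ [x Sx <-]; exact: h.
Qed.

Lemma inf_gt_elim (S : set R) (F : R -> \bar R) a :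
  (a%:E < ereal_inf [set F x | x in S])%E ->
  exists c, a < c /\ forall x, S x -> (c%:E <= F x)%E.
Proof.
set u := ereal_inf _ => hu.
have lb x : S x -> (u <= F x)%E by move=> Sx; apply: ereal_inf_lbound; exists x.
move: hu lb; case: u => [r| |] hu lb.
- by exists r; split; [rewrite -lte_fin|move=> x /lb].
- exists (a + 1); split; first lra.
  by move=> x /lb; rewrite leye_eq => /eqP ->; rewrite leey.
- by [].
Qed.
Lemma sq_derive (k x : R) :
  is_derive x (1:R) (fun t : R => k * (t * t)) (2 * k * x).
Proof.
have h := is_deriveZ k (is_deriveM (is_derive_id x (1:R)) (is_derive_id x (1:R))).
have -> : (fun t : R => k * (t * t)) = k \*: (@id R * @id R) by [].
suff -> : 2 * k * x = k *: (id x *: (1:R) + id x *: (1:R)) by [].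
change (2 * k * x = k * (x * 1 + x * 1)); ring.
Qed.

Lemma F_derive m t : - s0 < t ->
  is_derive t (1:R) (fun u => phi u - m / 2 * (u * u)) (dphi t - m * t).
Proof.
move=> ht; have h := is_deriveB (hd1 ht) (sq_derive (m / 2) t).
have -> : (fun u => phi u - m / 2 * (u * u)) = phi - (fun u => m / 2 * (u * u)) by [].
by rewrite (_ : m * t = 2 * (m / 2) * t) //; field.
Qed.

Lemma max_deriv m ts : 0 < ts -> (forall t, 0 < t -> gq t <= m) -> gq ts = m ->
  dphi ts = m * ts.
Proof.
move=> ts0 hle heq.
have hs : - s0 < 0 by rewrite oppr_lt0.
have pos x : x \in `]0, 2 * ts[ -> 0 < x by rewrite in_itv /= => /andP[].
have hmax := @derive1_at_max R (fun u => phi u - m / 2 * (u * u)) 0 (2 * ts) ts.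
have /hmax {hmax} : 0 <= 2 * ts by rewrite mulr_ge0// ltW.
move=> /(_ _ _ _) h.
have := h (fun t ht => let: DeriveDef d _ := F_derive m (lt_trans hs (pos t ht)) in d).
have tsin : ts \in `]0, 2 * ts[ by rewrite in_itv /=; apply/andP; split=> //; lra.
move=> /(_ tsin) {h} h.
have : is_derive ts (1:R) (fun u => phi u - m / 2 * (u * u)) 0.
  apply: h => t /pos t0.
  have e1 : phi ts = m / 2 * (ts * ts).
    by rewrite -heq /gq; field; rewrite gt_eqF.
  rewrite e1 subrr.
  have := hle t t0; rewrite /gq ler_pdivrMr ?divr_gt0 ?exprn_gt0// expr2.
  move=> h1; lra.
case=> _ e0; have [_ e2] := F_derive m (lt_trans hs ts0).
by move: e2; rewrite e0 => /eqP; rewrite eq_sym subr_eq0 => /eqP.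
Qed.
Definition Aprop (m ts : R) :=
  [/\ 0 < ts, phi ts / (ts ^+ 2 / 2) = m,
      forall e : R, 0 < e ->
        (ereal_sup [set (phi t / (t ^+ 2 / 2))%R%:E | t in [set t : R | (0 < t < ts - e)%R]]
           < m%:E)%E
    & forall e : R, 0 < e ->
        (ereal_sup [set (phi t / (t ^+ 2 / 2))%R%:E | t in [set t : R | (ts + e < t)%R]]
           < m%:E)%E].

Definition Bprop (m ss : R) :=
  [/\ 0 < ss, (rt ss * ((ss ^+ 2 / 2)^-1)%R%:E = (m^-1)%R%:E)%E,
      forall e : R, 0 < e ->
        ((m^-1)%R%:E < ereal_inf [set (rt s * ((s ^+ 2 / 2)^-1)%R%:E)%E
                                 | s in [set s : R | (0 < s < ss - e)%R]])%E
    & forall e : R, 0 < e ->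
        ((m^-1)%R%:E < ereal_inf [set (rt s * ((s ^+ 2 / 2)^-1)%R%:E)%E
                                 | s in [set s : R | (ss + e < s)%R]])%E].

Lemma A_gle m ts : Aprop m ts -> forall t, 0 < t -> gq t <= m.
Proof.
case=> ts0 gts sep1 sep2 t t0.
have [tts|tts|->] := ltgtP t ts; last by rewrite /gq gts.
- have e0 : 0 < (ts - t) / 2 by rewrite divr_gt0// subr_gt0.
  have [c [cm hc]] := @sup_lt_elim _ gq m (sep1 _ e0).
  apply: le_trans (ltW cm); apply: hc; apply/andP; split => //; lra.
- have e0 : 0 < (t - ts) / 2 by rewrite divr_gt0// subr_gt0.
  have [c [cm hc]] := @sup_lt_elim _ gq m (sep2 _ e0).
  apply: le_trans (ltW cm); apply: hc => /=; lra.
Qed.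

Lemma hq_ss m ts : 0 < m -> 0 < ts -> phi ts = m * (ts ^+ 2 / 2) ->
  dphi ts = m * ts -> hq (ts * m) = (m^-1)%:E.
Proof.
move=> m0 ts0 e1 e2.
rewrite /hq (_ : ts * m = dphi ts); last by rewrite e2 mulrC.
rewrite (rt_eq (ltW ts0)) -EFinM e1 e2; congr EFin; field.
by rewrite !gt_eqF.
Qed.

Lemma A_to_B m ts : 1 < m -> Aprop m ts ->
  [/\ Bprop m (ts * m), dphi ts = ts * m & phi ts = m * (ts ^+ 2 / 2)].
Proof.
move=> m1 hA; have gle := A_gle hA; case: hA => ts0 gts sep1 sep2.
have m0 : 0 < m by apply: lt_trans m1.
have d1 : dphi ts = m * ts by exact: max_deriv.
have e1 : phi ts = m * (ts ^+ 2 / 2) by rewrite -gts /gq; field; rewrite gt_eqF.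
split; [|by rewrite mulrC|by []].
split.
- exact: mulr_gt0.
- exact: hq_ss.
- move=> e e0.
  have [c [cm hc]] := @sup_lt_elim _ gq m (sep1 _ (divr_gt0 e0 m0)).
  apply: (@inf_gt_bound _ hq (m^-1 + (m - c) / m ^+ 2)); last first.
    by rewrite ltrDl divr_gt0 ?exprn_gt0// subr_gt0.
  move=> s /andP[sp s1]; apply: le_trans (K1 m0 sp).
  rewrite lee_fin lerD2l ler_pM2r ?invr_gt0 ?exprn_gt0// lerD2l lerN2.
  apply: hc; apply/andP; split; first exact: divr_gt0.
  rewrite ltr_pdivrMr// mulrBl divfK ?gt_eqF//.
- move=> e e0.
  have [c [cm hc]] := @sup_lt_elim _ gq m (sep2 _ (divr_gt0 e0 m0)).
  apply: (@inf_gt_bound _ hq (m^-1 + (m - c) / m ^+ 2)); last first.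
    by rewrite ltrDl divr_gt0 ?exprn_gt0// subr_gt0.
  move=> s /= s1; have sp : 0 < s by apply: lt_trans s1; rewrite addr_gt0// mulr_gt0.
  apply: le_trans (K1 m0 sp).
  rewrite lee_fin lerD2l ler_pM2r ?invr_gt0 ?exprn_gt0// lerD2l lerN2.
  apply: hc => /=.
  rewrite ltr_pdivlMr// mulrDl divfK ?gt_eqF//.
Qed.

Lemma B_hge m ss : Bprop m ss -> forall s, 0 < s -> ((m^-1)%:E <= hq s)%E.
Proof.
case=> ss0 hss sep1 sep2 s sp.
have [sss|sss|->] := ltgtP s ss; last by rewrite /hq hss.
- have e0 : 0 < (ss - s) / 2 by rewrite divr_gt0// subr_gt0.
  have [c [cm hc]] := @inf_gt_elim _ hq _ (sep1 _ e0).
  apply: le_trans (hc s _); first by rewrite lee_fin ltW.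
  apply/andP; split => //; lra.
- have e0 : 0 < (s - ss) / 2 by rewrite divr_gt0// subr_gt0.
  have [c [cm hc]] := @inf_gt_elim _ hq _ (sep2 _ e0).
  apply: le_trans (hc s _); first by rewrite lee_fin ltW.
  rewrite /=; lra.
Qed.

Lemma B_uniq m ss ss' : Bprop m ss -> Bprop m ss' -> ss = ss'.
Proof.
move=> hB hB'; case: (hB) => ss0 hss sep1 sep2; case: (hB') => ss0' hss' _ _.
have [lt|lt|//] := ltgtP ss ss'.
- have e0 : 0 < (ss' - ss) / 2 by rewrite divr_gt0// subr_gt0.
  have [c [cm hc]] := @inf_gt_elim _ hq _ (sep2 _ e0).
  have := hc ss' ltac:(rewrite /=; lra).
  by rewrite /hq hss' lee_fin leNgt cm.
- have e0 : 0 < (ss - ss') / 2 by rewrite divr_gt0// subr_gt0.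
  have [c [cm hc]] := @inf_gt_elim _ hq _ (sep1 _ e0).
  have : (0 < ss' < ss - (ss - ss') / 2) by apply/andP; split => //; lra.
  move=> /hc; by rewrite /hq hss' lee_fin leNgt cm.
Qed.

Lemma B_to_A m ss : 1 < m -> Bprop m ss ->
  [/\ Aprop m (ss / m), dphi (ss / m) = ss & phi (ss / m) = m * ((ss / m) ^+ 2 / 2)].
Proof.
move=> m1 hB; have hge := B_hge hB; case: (hB) => ss0 hss sep1 sep2.
have m0 : 0 < m by apply: lt_trans m1.
set ts := ss / m.
have ts0 : 0 < ts by exact: divr_gt0.
have gle t : 0 < t -> gq t <= m.
  move=> t0; rewrite -[m]invrK; apply: K2 => //; first by rewrite invr_gt0.
  exact/hge/dphi_pos.
have gts : gq ts = m.
  apply/eqP; rewrite eq_le gle//=.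
  have := K1 m0 ss0; rewrite /hq hss lee_fin -/ts gerDl => h.
  have hm : 0 < (m ^+ 2)^-1 by rewrite invr_gt0 exprn_gt0.
  move: h; rewrite -/ts; set g := gq ts => h.
  rewrite -subr_le0; nra.
have d1 : dphi ts = m * ts by exact: max_deriv.
have dts : dphi ts = ss by rewrite d1 /ts mulrC divfK ?gt_eqF.
have e1 : phi ts = m * (ts ^+ 2 / 2) by rewrite -gts /gq; field; rewrite gt_eqF.
have hs : - s0 < 0 by rewrite oppr_lt0.
split => //; split => //.
- move=> e e0.
  have [tse|tse] := leP (ts - e) 0.
    apply: (@sup_lt_bound _ gq 0 m _ m0).
    by move=> x /andP[x0 x1]; lra.
  set e' := ss - dphi (ts - e).
  have e'0 : 0 < e'.
    by rewrite /e' subr_gt0 -dts; apply: dphi_lt; [exact: lt_trans hs tse|lra].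
  have [c [cm hc]] := @inf_gt_elim _ hq _ (sep1 _ e'0).
  have c0 : 0 < c by apply: lt_trans cm; rewrite invr_gt0.
  apply: (@sup_lt_bound _ gq c^-1 m); last first.
    by rewrite -[m]invrK ltf_pV2// ?posrE ?invr_gt0.
  move=> t /andP[t0 t1]; apply: K2 => //; apply: hc; apply/andP; split.
    exact: dphi_pos.
  rewrite /e' opprB addrC subrK; apply: dphi_lt => //; exact: lt_trans hs t0.
- move=> e e0.
  set e' := dphi (ts + e) - ss.
  have e'0 : 0 < e'.
    by rewrite /e' subr_gt0 -dts; apply: dphi_lt; [exact: lt_trans hs ts0|lra].
  have [c [cm hc]] := @inf_gt_elim _ hq _ (sep2 _ e'0).
  have c0 : 0 < c by apply: lt_trans cm; rewrite invr_gt0.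
  apply: (@sup_lt_bound _ gq c^-1 m); last first.
    by rewrite -[m]invrK ltf_pV2// ?posrE ?invr_gt0.
  move=> t /= t1; have t0 : 0 < t by apply: lt_trans t1; lra.
  apply: K2 => //; apply: hc => /=.
  rewrite /e' addrC subrK; apply: dphi_lt => //; apply: lt_trans hs _; lra.
Qed.
Lemma inverse_part ts : 0 < ts ->
  let I := fun s => fine (rt s) in
  [/\ derivable I (dphi ts) 1, derive1 I (dphi ts) = ts,
      derivable (derive1 I) (dphi ts) 1 & derive1 (derive1 I) (dphi ts) = (ddphi ts)^-1].
Proof.
move=> ts0 I.
have hs : - s0 < 0 by rewrite oppr_lt0.
pose a := ts / 2; pose b := ts + 1.
have a0 : 0 < a by rewrite divr_gt0.
have ab : a < b by rewrite /a /b; lra.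
have ats : a < ts < b by apply/andP; rewrite /a /b; split; lra.
have ha : - s0 < a by exact: lt_trans hs a0.
pose tau s := xget ts [set t | a < t < b /\ dphi t = s].
have tau_spec s : dphi a < s < dphi b -> a < tau s < b /\ dphi (tau s) = s.
  move=> /andP[h1 h2].
  suff : exists c, a < c < b /\ dphi c = s.
    by move=> /(@xgetPex _ ts [set t | a < t < b /\ dphi t = s]).
  have [c cin hc] := @IVT R dphi a b s (ltW ab) (@dphi_cont a b ha)
    (ltac:(by rewrite ge_min le_max (ltW h1) (ltW h2) orbT)).
  exists c; split => //; move: cin; rewrite in_itv /= => /andP[ca cb].
  apply/andP; split.
    rewrite lt_neqAle ca andbT; apply/eqP => e; move: h1; rewrite e hc; lra.
  rewrite lt_neqAle cb andbT; apply/eqP => e; move: h2; rewrite -e hc; lra.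
have tau_dphi t : a < t < b -> tau (dphi t) = t.
  move=> /andP[t1 t2].
  have [/andP[u1 u2] hu] := tau_spec (dphi t)
    (ltac:(by apply/andP; split; apply: dphi_lt => //; exact: lt_trans ha t1)).
  have [lt|lt|//] := ltgtP (tau (dphi t)) t.
    by have := dphi_lt (lt_trans ha u1) lt; rewrite hu ltxx.
  by have := dphi_lt (lt_trans ha t1) lt; rewrite hu ltxx.
have nearab t : a < t < b -> \forall z \near t, a < z < b.
  move=> tin; have := @near_in_itvoo R a b t (ltac:(by rewrite in_itv)).
  by move=> h; apply: (filterS _ h) => z; rewrite in_itv.
have tau_der s : dphi a < s < dphi b -> is_derive s (1:R) tau (ddphi (tau s))^-1.
  move=> sin; have [/andP[t1 t2] ht] := tau_spec s sin.
  have tgt : - s0 < tau s by exact: lt_trans ha t1.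
  have := @is_derive_inverse R dphi tau (ddphi (tau s)) (tau s) _ _ (hd2 tgt)
    (lt0r_neq0 (hdd tgt)).
  rewrite ht; apply.
    near=> z; apply: tau_dphi; near: z; apply: nearab; by rewrite t1 t2.
  near=> z; apply: differentiable_continuous; apply/derivable1_diffP.
  have : a < z < b by near: z; apply: nearab; by rewrite t1 t2.
  by case/andP => z1 _; have [] := hd2 (lt_trans ha z1).
have I_eq s : dphi a < s < dphi b -> I s = s * tau s - phi (tau s).
  move=> sin; have [/andP[t1 t2] ht] := tau_spec s sin.
  by rewrite /I -{1 2}ht (rt_eq (ltW (lt_trans a0 t1))) /= ht.
have I_der s : dphi a < s < dphi b -> is_derive s (1:R) I (tau s).
  move=> sin; have [/andP[t1 t2] ht] := tau_spec s sin.
  have tgt : - s0 < tau s by exact: lt_trans ha t1.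
  have d1 := is_deriveM (is_derive_id s (1:R)) (tau_der s sin).
  have d2 := is_derive1_comp (hd1 tgt) (tau_der s sin).
  have d3 := is_deriveB d1 d2.
  apply: (@near_eq_is_derive _ _ _ ((@id R * tau) - (phi \o tau))).
    have := @near_in_itvoo R (dphi a) (dphi b) s (ltac:(by rewrite in_itv)).
    by apply: filterS => z; rewrite in_itv => /I_eq ->.
  suff <- : id s *: (ddphi (tau s))^-1 + tau s *: (1:R) -
      dphi (tau s) * (ddphi (tau s))^-1 = tau s by [].
  rewrite ht /=.
  change (s * (ddphi (tau s))^-1 + tau s * 1 - s * (ddphi (tau s))^-1 = tau s).
  ring.
set ss := dphi ts.
have ssin : dphi a < ss < dphi b.
  by case/andP: ats => h1 h2; apply/andP; split; apply: dphi_lt => //; exact: lt_trans ha h1.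
have tss : tau ss = ts by apply: tau_dphi.
have nss : \forall z \near ss, dphi a < z < dphi b.
  have := @near_in_itvoo R (dphi a) (dphi b) ss (ltac:(by rewrite in_itv)).
  by move=> h; apply: (filterS _ h) => z; rewrite in_itv.
have eqd : \forall z \near ss, tau z = derive1 I z.
  apply: filterS nss => z zin; rewrite derive1E.
  by have [_ ->] := I_der z zin.
split.
- by have [] := I_der ss ssin.
- by rewrite derive1E; have [_ ->] := I_der ss ssin.
- apply: (@near_eq_derivable _ _ _ tau) eqd _.
  by have [] := tau_der ss ssin.
- rewrite derive1E -(near_eq_derive _ eqd).
  by have [_ ->] := tau_der ss ssin; rewrite tss.
Unshelve. all: by end_near.
Qed.
Lemma main_abstract (m : R) : 1 < m ->
  let A ts := Aprop m ts in let B ss := Bprop m ss in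
  let I := fun s => fine (rt s) in
  ((exists ts, A ts) <-> (exists ss, B ss)) /\
  (forall ts ss, A ts -> B ss ->
    [/\ (phi ts)%:E = rt ss, rt ss = (ss * ts / 2)%:E,
        [/\ derivable phi ts 1, ss = derive1 phi ts & ss = ts * m],
        [/\ derivable I ss 1, ts = derive1 I ss & ts = ss / m]
      & [/\ derivable (derive1 phi) ts 1, derivable (derive1 I) ss 1 &
            derive1 (derive1 I) ss * derive1 (derive1 phi) ts = 1]]).
Proof.
move=> m1 A B I; have m0 : 0 < m by apply: lt_trans m1.
split.
  split => [[ts hA]|[ss hB]].
    by have [hB _ _] := A_to_B m1 hA; exists (ts * m).
  by have [hA _ _] := B_to_A m1 hB; exists (ss / m).
move=> ts ss hA hB.
have [hB' d1 e1] := A_to_B m1 hA.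
have ess : ss = ts * m := B_uniq hB hB'.
have ts0 : 0 < ts by case: hA.
have hs : - s0 < 0 by rewrite oppr_lt0.
have tsg : - s0 < ts by exact: lt_trans hs ts0.
have rte : rt ss = (ts * m * ts - phi ts)%:E by rewrite ess -d1 rt_eq ?ltW.
have [iI1 iI2 iI3 iI4] := inverse_part ts0.
rewrite -/I d1 -ess in iI1 iI2 iI3 iI4.
have near_d : \forall z \near ts, dphi z = derive1 phi z.
  near=> z; rewrite derive1E.
  have zg : - s0 < z.
    have : z \in `]- s0, ts + 1[.
      near: z; apply: near_in_itvoo; rewrite in_itv /= tsg /=; lra.
    by rewrite in_itv /= => /andP[].
  by have [_ ->] := hd1 zg.
split.
- by rewrite rte e1; congr EFin; field.
- by rewrite rte e1 ess; congr EFin; field.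
- split; first by have [] := hd1 tsg.
  + by rewrite derive1E; have [_ ->] := hd1 tsg; rewrite d1 ess.
  + exact: ess.
- split.
  + exact: iI1.
  + by rewrite iI2.
  + by rewrite ess; field; rewrite gt_eqF.
- split.
  + apply: (@near_eq_derivable _ _ _ dphi) near_d _.
    by have [] := hd2 tsg.
  + exact: iI3.
  + rewrite iI4 [derive1 (derive1 phi) ts]derive1E -(near_eq_derive _ near_d).
    by have [_ ->] := hd2 tsg; rewrite mulVf// gt_eqF// hdd.
Unshelve. all: by end_near.
Qed.

End legendre.

Unset Implicit Arguments.

Theorem proposition5p1 (d : measure_display) (T : measurableType d) (R : realType)
  (P : probability T R) (X : {RV P >-> R}) (m : R) :
  ('E_P[X] = 0)%E ->
  ('V_P[X] = 1)%E ->
  (exists sigma0 : R, 0 < sigma0 /\ forall t : R, - sigma0 <= t -> ('M_P X t < +oo)%E) ->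
  1 < m ->
  let A (ts : R) :=
    [/\ 0 < ts, cgf P X ts / (ts ^+ 2 / 2) = m,
        forall e : R, 0 < e ->
          (ereal_sup [set (cgf P X t / (t ^+ 2 / 2))%R%:E | t in [set t : R | (0 < t < ts - e)%R]]
             < m%:E)%E
      & forall e : R, 0 < e ->
          (ereal_sup [set (cgf P X t / (t ^+ 2 / 2))%R%:E | t in [set t : R | (ts + e < t)%R]]
             < m%:E)%E] in
  let B (ss : R) :=
    [/\ 0 < ss, (rate P X ss * ((ss ^+ 2 / 2)^-1)%R%:E = (m^-1)%R%:E)%E,
        forall e : R, 0 < e ->
          ((m^-1)%R%:E < ereal_inf [set (rate P X s * ((s ^+ 2 / 2)^-1)%R%:E)%E
                                   | s in [set s : R | (0 < s < ss - e)%R]])%E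
      & forall e : R, 0 < e ->
          ((m^-1)%R%:E < ereal_inf [set (rate P X s * ((s ^+ 2 / 2)^-1)%R%:E)%E
                                   | s in [set s : R | (ss + e < s)%R]])%E] in
  let phi := cgf P X in
  let I := fun s : R => fine (rate P X s) in
  ((exists ts, A ts) <-> (exists ss, B ss)) /\
  (forall ts ss, A ts -> B ss ->
    [/\ (phi ts)%:E = rate P X ss, rate P X ss = (ss * ts / 2)%:E,
        [/\ derivable phi ts 1, ss = derive1 phi ts & ss = ts * m],
        [/\ derivable I ss 1, ts = derive1 I ss & ts = ss / m]
      & [/\ derivable (derive1 phi) ts 1, derivable (derive1 I) ss 1 &
            derive1 (derive1 I) ss * derive1 (derive1 phi) ts = 1]]).
Proof.
move=> EX0 VX1 [s0 [s0_gt0 Mfin]] m1.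
have hcgf : cgf P X = @Phi _ _ _ P X by apply/funext => t; exact: cgfE.
have hd1 : forall t, - s0 < t -> is_derive t (1:R) (cgf P X) (@dPhi _ _ _ P X t).
  by move=> t ht; rewrite hcgf; apply: Phi_derive; eassumption.
have hd2 : forall t, - s0 < t -> is_derive t (1:R) (@dPhi _ _ _ P X) (@ddPhi _ _ _ P X t).
  by move=> t ht; apply: dPhi_derive; eassumption.
have hdd : forall t, - s0 < t -> 0 < @ddPhi _ _ _ P X t.
  by move=> t ht; apply: ddPhi_pos; eassumption.
have dphi0 : @dPhi _ _ _ P X 0 = 0 by apply: dPhi0.
exact: (main_abstract s0_gt0 hd1 hd2 hdd dphi0 m1).
Qed.
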